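(* For all $\epsilon_1,\epsilon_2\ge0$ with $\epsilon_1+\sqrt{\epsilon_2}<1$ and any two channels $\mathcal{E},\mathcal{M}$ with the same input and output systems, $$D^{\epsilon_1}_H(\mathcal{E}\|\mathcal{M})\le D^{\epsilon_2}_{\max}(\mathcal{E}\|\mathcal{M})+\log\frac{1}{1-\epsilon_1-\sqrt{\epsilon_2}}.$$
   Context: Finite-dimensional Hilbert spaces, $\log$ base 2, channels are CPTP maps. For states: $F(\rho,\sigma)=\|\sqrt\rho\sqrt\sigma\|_1^2$; $D_{\max}(\rho\|\sigma)=\inf\{\lambda:\rho\le2^\lambda\sigma\}$; $D^\epsilon_H(\rho\|\sigma)=\sup\{-\log\mathrm{Tr}[P\sigma]:0\le P\le\mathbb{1},\mathrm{Tr}[P\rho]\ge1-\epsilon\}$. For channels: $F(\mathcal{E}_1,\mathcal{E}_2)=\min_\psi F((\mathrm{id}\otimes\mathcal{E}_1)(\psi),(\mathrm{id}\otimes\mathcal{E}_2)(\psi))$ over pure $\psi$ on reference $\otimes$ input; $D^\epsilon_H(\mathcal{E}\|\mathcal{M})=\sup_\psi D^\epsilon_H((\mathrm{id}\otimes\mathcal{E})(\psi)\|(\mathrm{id}\otimes\mathcal{M})(\psi))$; $D^\epsilon_{\max}(\mathcal{E}\|\mathcal{M})=\inf\{\sup_\psi D_{\max}((\mathrm{id}\otimes\mathcal{E}')(\psi)\|(\mathrm{id}\otimes\mathcal{M})(\psi)):\mathcal{E}'\text{ a channel with }F(\mathcal{E}',\mathcal{E})\ge1-\epsilon\}$. *)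

(* Defs.v *)
From HB Require Import structures.
From mathcomp Require Import all_boot all_order all_algebra.
From mathcomp Require Import complex mxtens.
From mathcomp Require Import boolp classical_sets reals constructive_ereal ereal exp.
Set Implicit Arguments. Unset Strict Implicit. Unset Printing Implicit Defensive.
Import Order.TTheory GRing.Theory Num.Theory.
Local Open Scope ring_scope.
Local Open Scope classical_set_scope.

Section QInfo.
Variable R : realType.
Local Notation C := R[i].

Definition adjmx m n (A : 'M[C]_(m, n)) : 'M[C]_(n, m) := (map_mx (@conjc R) A)^T.

Definition psd n (A : 'M[C]_n) : Prop :=
  adjmx A = A /\ forall v : 'cV[C]_n, 0 <= (adjmx v *m A *m v) 0 0.

Definition loewner_le n (A B : 'M[C]_n) : Prop := psd (B - A).

Definition is_state n (rho : 'M[C]_n) : Prop := psd rho /\ \tr rho = 1.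

Definition pure_state n (psi : 'M[C]_n) : Prop :=
  exists v : 'cV[C]_n, (adjmx v *m v) 0 0 = 1 /\ psi = v *m adjmx v.

(** the (unique) PSD square root of a PSD matrix (0 otherwise) *)
Definition sqrtm n (A : 'M[C]_n) : 'M[C]_n :=
  xget 0 [set B : 'M[C]_n | psd B /\ B *m B = A].

Definition trnorm n (A : 'M[C]_n) : R := @complex.Re R (\tr (sqrtm (adjmx A *m A))).

Definition fidelity n (rho sigma : 'M[C]_n) : R :=
  trnorm (sqrtm rho *m sqrtm sigma) ^+ 2.

Definition log2 (x : R) : R := ln x / ln 2.

Definition mlog2 (t : R) : \bar R := if t <= 0 then +oo%E else (- log2 t)%:E.

Definition Dmax n (rho sigma : 'M[C]_n) : \bar R :=
  ereal_inf [set (lam%:E)%E | lam in [set lam : R |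
     loewner_le rho (((2 `^ lam)%:C)%C *: sigma)]].

Definition DH (eps : R) n (rho sigma : 'M[C]_n) : \bar R :=
  ereal_sup [set mlog2 (@complex.Re R (\tr (P *m sigma))) | P in [set P : 'M[C]_n |
     psd P /\ loewner_le P 1%:M /\ 1 - eps <= @complex.Re R (\tr (P *m rho))]].

(** block (i,j) of a matrix on reference (dim k) tensor system (dim d) *)
Definition blk k d (X : 'M[C]_(k * d)) (i j : 'I_k) : 'M[C]_d :=
  \matrix_(a, b) X (mxtens_index (i, a)) (mxtens_index (j, b)).

(** (id_k (x) Phi)(X) *)
Definition idtens k dA dB (Phi : 'M[C]_dA -> 'M[C]_dB) (X : 'M[C]_(k * dA))
  : 'M[C]_(k * dB) :=
  \sum_(i < k) \sum_(j < k) (delta_mx i j *t Phi (blk X i j)).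

Definition is_channel dA dB (Phi : 'M[C]_dA -> 'M[C]_dB) : Prop :=
  [/\ forall (a : C) (X Y : 'M[C]_dA), Phi (a *: X + Y) = a *: Phi X + Phi Y,
      forall X : 'M[C]_dA, \tr (Phi X) = \tr X
    & forall (k : nat) (X : 'M[C]_(k * dA)), psd X -> psd (idtens Phi X)].

Definition chan_fidelity dA dB (E1 E2 : 'M[C]_dA -> 'M[C]_dB) : R :=
  inf [set r : R | exists (k : nat) (psi : 'M[C]_(k * dA)),
          pure_state psi /\ r = fidelity (idtens E1 psi) (idtens E2 psi)].

Definition DH_chan (eps : R) dA dB (E M : 'M[C]_dA -> 'M[C]_dB) : \bar R :=
  ereal_sup [set x : \bar R | exists (k : nat) (psi : 'M[C]_(k * dA)),
          pure_state psi /\ x = DH eps (idtens E psi) (idtens M psi)].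

Definition Dmax_chan0 dA dB (E M : 'M[C]_dA -> 'M[C]_dB) : \bar R :=
  ereal_sup [set x : \bar R | exists (k : nat) (psi : 'M[C]_(k * dA)),
          pure_state psi /\ x = Dmax (idtens E psi) (idtens M psi)].

Definition Dmax_chan (eps : R) dA dB (E M : 'M[C]_dA -> 'M[C]_dB) : \bar R :=
  ereal_inf [set Dmax_chan0 E' M | E' in [set E' : 'M[C]_dA -> 'M[C]_dB |
          is_channel E' /\ 1 - eps <= chan_fidelity E' E]].

End QInfo.

(* Main.v *)
Require Import Defs.
From HB Require Import structures.
From mathcomp Require Import all_boot all_order all_algebra.
From mathcomp Require Import complex mxtens.
From mathcomp Require Import boolp classical_sets reals constructive_ereal ereal exp.
From mathcomp Require Import spectral sesquilinear ring lra.
Import Order.TTheory GRing.Theory Num.Theory.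
Set Implicit Arguments. Unset Strict Implicit. Unset Printing Implicit Defensive.
Local Open Scope ring_scope.

Section Real.
Variable R : rcfType.

Lemma quad_disc (a b r : R) : 0 <= a ->
  (forall t, 0 <= t ^+ 2 * a - 2 * t * r + b) -> r ^+ 2 <= a * b.
Proof.
move=> a0 key; case: (eqVneq a 0) => [a_eq0|anz].
  subst a; case: (eqVneq r 0) => [->|rnz]; first by rewrite expr0n /= mul0r.
  have := key ((b + 1) / (2 * r)).
  have -> : ((b + 1) / (2 * r)) ^+ 2 * 0 - 2 * ((b + 1) / (2 * r)) * r + b = -1.
    by field; rewrite ?rnz ?pnatr_eq0 ?andbT.
  by move=> h; exfalso; lra.
have apos : 0 < a by rewrite lt_def anz a0.
have := key (r / a).
have -> : (r / a) ^+ 2 * a - 2 * (r / a) * r + b = (a * b - r ^+ 2) / a.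
  by field.
by rewrite pmulr_lge0 ?invr_gt0 // subr_ge0.
Qed.

Lemma le_sqrt_of_sqr (r c : R) : r ^+ 2 <= c -> r <= Num.sqrt c.
Proof.
move=> h; case: (lerP r 0) => [r0|r0]; first exact: le_trans r0 (sqrtr_ge0 c).
by rewrite -(ger0_norm (ltW r0)) -sqrtr_sqr ler_wsqrtr.
Qed.

Lemma fvdg_real (p q : R) : 0 <= p <= 1 -> 0 <= q <= 1 ->
  (Num.sqrt (q * p) + Num.sqrt ((1 - q) * (1 - p))) ^+ 2 <= 1 - (p - q) ^+ 2.
Proof.
move=> /andP[p0 p1] /andP[q0 q1].
have q'0 : 0 <= 1 - q by rewrite subr_ge0.
have p'0 : 0 <= 1 - p by rewrite subr_ge0.
set x := Num.sqrt (q * p); set y := Num.sqrt ((1 - q) * (1 - p)).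
set u := Num.sqrt (q * (1 - q)); set v := Num.sqrt (p * (1 - p)).
have hx : x ^+ 2 = q * p by rewrite sqr_sqrtr // mulr_ge0.
have hy : y ^+ 2 = (1 - q) * (1 - p) by rewrite sqr_sqrtr // mulr_ge0.
have hu : u ^+ 2 = q * (1 - q) by rewrite sqr_sqrtr // mulr_ge0.
have hv : v ^+ 2 = p * (1 - p) by rewrite sqr_sqrtr // mulr_ge0.
have hxy : x * y = u * v.
  rewrite /x /y /u /v -!sqrtrM ?mulr_ge0 //; congr Num.sqrt; ring.
have : 0 <= (u - v) ^+ 2 by exact: sqr_ge0.
nra.
Qed.

End Real.

Section Aux.
Local Open Scope sesquilinear_scope.
Local Open Scope complex_scope.
Variable R : realType.
Local Notation C := R[i].

Lemma adjmxE m n (A : 'M[C]_(m, n)) : adjmx A = A ^t*.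
Proof. by rewrite /adjmx map_trmx. Qed.

Lemma adjmxK m n (A : 'M[C]_(m, n)) : adjmx (adjmx A) = A.
Proof. by apply/matrixP=> i j; rewrite !mxE conjcK. Qed.

Lemma adjmxM m n p (A : 'M[C]_(m, n)) (B : 'M[C]_(n, p)) :
  adjmx (A *m B) = adjmx B *m adjmx A.
Proof. by rewrite /adjmx map_mxM trmx_mul. Qed.

Lemma adjmxD m n (A B : 'M[C]_(m, n)) : adjmx (A + B) = adjmx A + adjmx B.
Proof. by apply/matrixP=> i j; rewrite !mxE rmorphD. Qed.

Lemma adjmxN m n (A : 'M[C]_(m, n)) : adjmx (- A) = - adjmx A.
Proof. by apply/matrixP=> i j; rewrite !mxE rmorphN. Qed.

Lemma adjmxB m n (A B : 'M[C]_(m, n)) : adjmx (A - B) = adjmx A - adjmx B.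
Proof. by rewrite adjmxD adjmxN. Qed.

Lemma adjmxZ m n a (A : 'M[C]_(m, n)) : adjmx (a *: A) = conjc a *: adjmx A.
Proof. by apply/matrixP=> i j; rewrite !mxE rmorphM. Qed.

Lemma adjmx1 n : adjmx (1%:M : 'M[C]_n) = 1%:M.
Proof. by apply/matrixP=> i j; rewrite !mxE rmorphMn rmorph1 eq_sym. Qed.

Lemma adjmx_diag n (d : 'rV[C]_n) : adjmx (diag_mx d) = diag_mx (map_mx conjc d).
Proof.
apply/matrixP=> i j; rewrite !mxE rmorphMn eq_sym.
by case: (eqVneq i j) => [->|]; rewrite ?mulr1n ?mulr0n.
Qed.

Lemma tr_adjmx n (A : 'M[C]_n) : \tr (adjmx A) = conjc (\tr A).
Proof. by rewrite /mxtrace rmorph_sum; apply: eq_bigr => i _; rewrite !mxE. Qed.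


Lemma ge0_real (x : C) : 0 <= x -> x = (complex.Re x)%:C.
Proof. by case: x => a b; rewrite lecE /= => /andP[/eqP-> _]. Qed.

Lemma conj_ge0_id (x : C) : 0 <= x -> conjc x = x.
Proof. by move=> /ge0_real ->; rewrite conjc_real. Qed.

Lemma cV_norm_ge0 m (w : 'cV[C]_m) : 0 <= (adjmx w *m w) 0 0.
Proof.
rewrite mxE; apply: sumr_ge0 => i _; rewrite !mxE mulrC; exact: mulcJ_ge0.
Qed.

Lemma psd_adjmul m n (B : 'M[C]_(m, n)) : psd (adjmx B *m B).
Proof.
split; first by rewrite adjmxM adjmxK.
move=> v; rewrite !mulmxA -[_ *m B *m v]mulmxA -adjmxM.
exact: cV_norm_ge0.
Qed.

Lemma psd_conj n m (A : 'M[C]_n) (B : 'M[C]_(n, m)) : psd A -> psd (adjmx B *m A *m B).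
Proof.
move=> [hA pA]; split; first by rewrite !adjmxM adjmxK hA mulmxA.
move=> v; have := pA (B *m v); rewrite adjmxM !mulmxA; done.
Qed.

Lemma psd_add n (A B : 'M[C]_n) : psd A -> psd B -> psd (A + B).
Proof.
move=> [hA pA] [hB pB]; split; first by rewrite adjmxD hA hB.
by move=> v; rewrite mulmxDr mulmxDl [in X in _ <= X]mxE; apply: addr_ge0.
Qed.

Lemma psd_entry n (A : 'M[C]_n) i : psd A -> 0 <= A i i.
Proof.
move=> [_ pA]; have := pA (delta_mx i 0).
have -> : adjmx (delta_mx i 0 : 'cV[C]_n) = delta_mx 0 i.
  by apply/matrixP=> a b; rewrite !mxE conjc_nat andbC.
by rewrite -colE -rowE !mxE.
Qed.

Lemma psd_tr n (A : 'M[C]_n) : psd A -> 0 <= \tr A.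
Proof. by move=> pA; apply: sumr_ge0 => i _; exact: psd_entry. Qed.

Lemma psd_diagmx n (d : 'rV[C]_n) : (forall i, 0 <= d 0 i) -> psd (diag_mx d).
Proof.
move=> d0; split.
  rewrite adjmx_diag; congr diag_mx; apply/rowP=> i; rewrite !mxE.
  exact: conj_ge0_id.
move=> v; rewrite mul_mx_diag mxE; apply: sumr_ge0 => i _; rewrite !mxE.
rewrite mulrAC; apply: mulr_ge0; last exact: d0.
by rewrite mulrC; exact: mulcJ_ge0.
Qed.

Lemma psd_idem n (G : 'M[C]_n) : adjmx G = G -> G *m G = G -> psd G.
Proof. by move=> hG iG; rewrite -iG -{1}hG; exact: psd_adjmul. Qed.

Lemma unitary_adj n (P : 'M[C]_n) : P \is unitarymx ->
  P *m adjmx P = 1%:M /\ adjmx P *m P = 1%:M.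
Proof.
move=> uP; rewrite adjmxE; split; first exact/unitarymxP.
by rewrite -invmx_unitary // mulVmx // unitarymx_unit.
Qed.

Lemma psd_spectral n (A : 'M[C]_n) : psd A -> exists (P : 'M[C]_n) (d : 'rV[C]_n),
  [/\ P *m adjmx P = 1%:M, adjmx P *m P = 1%:M, A = adjmx P *m diag_mx d *m P
    & forall i, 0 <= d 0 i].
Proof.
move=> pA; have hA := pA.1.
have nA : A \is normalmx by apply/normalmxP; rewrite -adjmxE hA.
have [PP1 PP2] := unitary_adj (spectral_unitarymx A).
have eA := orthomx_spectralP nA.
rewrite invmx_unitary ?spectral_unitarymx // -adjmxE in eA.
exists (spectralmx A), (spectral_diag A); split => // i.
set P := spectralmx A in PP1 PP2 eA *.
have := psd_entry i (psd_conj (adjmx P) pA).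
rewrite adjmxK {1}eA !mulmxA PP1 mul1mx -mulmxA PP1 mulmx1 mxE eqxx mulr1n.
done.
Qed.

Lemma psd_sqrt_ex n (A : 'M[C]_n) : psd A -> exists B, psd B /\ B *m B = A.
Proof.
move=> /psd_spectral [P [d [PP1 PP2 eA d0]]].
pose s : 'rV[C]_n := \row_i (Num.sqrt (complex.Re (d 0 i)))%:C.
exists (adjmx P *m diag_mx s *m P); split.
  apply: psd_conj; apply: psd_diagmx => i; rewrite mxE lecR; exact: sqrtr_ge0.
rewrite !mulmxA -(mulmxA _ P) PP1 mulmx1 -[adjmx P *m diag_mx s *m diag_mx s]mulmxA mulmx_diag eA.
congr (_ *m diag_mx _ *m _); apply/rowP=> i; rewrite !mxE -rmorphM /=.
rewrite -expr2 sqr_sqrtr; first by rewrite -ge0_real.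
by have := d0 i; rewrite lecE /= => /andP[_].
Qed.

Lemma sqrtmP n (A : 'M[C]_n) : psd A -> psd (sqrtm A) /\ sqrtm A *m sqrtm A = A.
Proof. by move=> pA; rewrite /sqrtm; apply: (xgetPex 0 (psd_sqrt_ex pA)). Qed.

Lemma tr_psd_mul n (A B : 'M[C]_n) : psd A -> psd B -> 0 <= \tr (A *m B).
Proof.
move=> pA pB; have [[hS pS] SS] := sqrtmP pB.
rewrite -SS mulmxA mxtrace_mulC mulmxA -{1}hS; apply: psd_tr; exact: psd_conj.
Qed.


Lemma ReD (x y : C) : complex.Re (x + y) = complex.Re x + complex.Re y.
Proof. by case: x; case: y. Qed.
Lemma ReN (x : C) : complex.Re (- x) = - complex.Re x.
Proof. by case: x. Qed.
Lemma ReB (x y : C) : complex.Re (x - y) = complex.Re x - complex.Re y.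
Proof. by rewrite ReD ReN. Qed.
Lemma ReMr (t : R) (x : C) : complex.Re (t%:C * x) = t * complex.Re x.
Proof. by case: x => a b /=; rewrite !mul0r subr0. Qed.
Lemma Re_conj (x : C) : complex.Re (conjc x) = complex.Re x.
Proof. by case: x. Qed.
Lemma Re_ge0 (x : C) : 0 <= x -> 0 <= complex.Re x.
Proof. by case: x => a b; rewrite lecE /= => /andP[]. Qed.
Lemma Re_le (x y : C) : x <= y -> complex.Re x <= complex.Re y.
Proof. by rewrite -subr_ge0 => /Re_ge0; rewrite ReB subr_ge0. Qed.

Lemma tr_adj_swap n (A B : 'M[C]_n) : \tr (adjmx B *m A) = conjc (\tr (adjmx A *m B)).
Proof. by rewrite -tr_adjmx adjmxM adjmxK. Qed.

Lemma cs_tr n (A B : 'M[C]_n) :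
  complex.Re (\tr (adjmx A *m B)) <=
  Num.sqrt (complex.Re (\tr (adjmx A *m A)) * complex.Re (\tr (adjmx B *m B))).
Proof.
apply: le_sqrt_of_sqr; apply: quad_disc.
  exact/Re_ge0/psd_tr/psd_adjmul.
move=> t; have := Re_ge0 (psd_tr (psd_adjmul (t%:C *: A - B))).
rewrite adjmxB adjmxZ conjc_real mulmxBl !mulmxBr -!scalemxAl -!scalemxAr.
rewrite !linearB !linearZ /= [\tr (adjmx B *m A)]tr_adj_swap.
move: (\tr (adjmx A *m A)) (\tr (adjmx A *m B)) (\tr (adjmx B *m B)).
move=> [a1 a2] [r1 r2] [b1 b2] /=.
move=> h; nra.
Qed.

Lemma polar n (X T : 'M[C]_n) : psd T -> T *m T = adjmx X *m X ->
  exists Z : 'M[C]_n, adjmx Z *m X = T /\ psd (1%:M - Z *m adjmx Z).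
Proof.
move=> pT TT; have [P [d [PP1 PP2 eT d0]]] := psd_spectral pT.
have [Y eY] : exists Y, Y = X *m adjmx P by eexists.
pose e : 'rV[C]_n := \row_i (d 0 i)^-1.
pose W := Y *m diag_mx e.
have hd : adjmx (diag_mx d) = diag_mx d.
  by rewrite adjmx_diag; congr diag_mx; apply/rowP=> i; rewrite mxE conj_ge0_id.
have he : adjmx (diag_mx e) = diag_mx e.
  rewrite adjmx_diag; congr diag_mx; apply/rowP=> i; rewrite !mxE conjc_inv.
  by rewrite conj_ge0_id.
have PTP : P *m T *m adjmx P = diag_mx d.
  by rewrite eT !mulmxA PP1 mul1mx -mulmxA PP1 mulmx1.
have YY : adjmx Y *m Y = diag_mx d *m diag_mx d.
  rewrite eY adjmxM adjmxK !mulmxA -(mulmxA P) -TT -PTP.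
  by rewrite !mulmxA -[P *m T *m adjmx P *m P]mulmxA PP2 mulmx1.
have XY : X = Y *m P by rewrite eY -mulmxA PP2 mulmx1.
exists (W *m P); split.
  rewrite adjmxM /W adjmxM he XY !mulmxA -(mulmxA _ (adjmx Y)) YY.
  rewrite eT -!mulmxA; congr (_ *m _); rewrite !mulmxA; congr (_ *m _).
  rewrite !mulmx_diag; congr diag_mx; apply/rowP=> i; rewrite !mxE.
  case: (eqVneq (d 0 i) 0) => [->|nz]; first by rewrite !mulr0.
  by rewrite mulVf // mul1r.
have -> : W *m P *m adjmx (W *m P) = Y *m (diag_mx e *m diag_mx e) *m adjmx Y.
  rewrite adjmxM -mulmxA (mulmxA P) PP1 mul1mx /W adjmxM he !mulmxA.
  done.
set K := Y *m _ *m adjmx Y.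
have hK : adjmx K = K.
  by rewrite /K !adjmxM adjmxK he !mulmxA.
have KK : K *m K = K.
  rewrite /K -!mulmxA (mulmxA (adjmx Y)) YY !mulmxA; congr (_ *m _).
  rewrite -!mulmxA; congr (_ *m _); rewrite !mulmxA !mulmx_diag; congr diag_mx.
  apply/rowP=> i; rewrite !mxE.
  case: (eqVneq (d 0 i) 0) => [->|nz]; first by rewrite invr0 !mul0r.
  by field.
apply: psd_idem; first by rewrite adjmxB adjmx1 hK.
by rewrite mulmxBl !mulmxBr !mul1mx !mulmx1 KK subrr subr0.
Qed.


Lemma tr_psd_le n (K G : 'M[C]_n) : psd K -> psd (1%:M - G) ->
  complex.Re (\tr (K *m G)) <= complex.Re (\tr K).
Proof.
move=> pK pG; have := Re_ge0 (tr_psd_mul pK pG).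
by rewrite mulmxBr mulmx1 linearB /= ReB subr_ge0.
Qed.

Lemma fid_bound n (rho rho' P : 'M[C]_n) : psd rho -> \tr rho = 1 ->
  psd rho' -> \tr rho' = 1 -> psd P -> psd (1%:M - P) ->
  (complex.Re (\tr (P *m rho)) - complex.Re (\tr (P *m rho'))) ^+ 2
    + fidelity rho' rho <= 1.
Proof.
move=> prho trho prho' trho' pP pP'.
have [pS' SS'] := sqrtmP prho'; have [pS SS] := sqrtmP prho.
set S' := sqrtm rho' in pS' SS' *; set S := sqrtm rho in pS SS *.
have hS' : adjmx S' = S' := pS'.1.
have hS : adjmx S = S := pS.1.
set X := S' *m S.
have [pT TT] := sqrtmP (psd_adjmul X).
set T := sqrtm _ in pT TT.
have [Z [ZX pZ]] := polar pT TT.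
have term : forall M, psd M ->
    complex.Re (\tr (adjmx Z *m S' *m M *m S)) <=
    Num.sqrt (complex.Re (\tr (M *m rho')) * complex.Re (\tr (M *m rho))).
  move=> M pM; have [pR RR] := sqrtmP pM; set Rm := sqrtm M in pR RR *.
  have hR : adjmx Rm = Rm := pR.1.
  have := cs_tr (Rm *m S' *m Z) (Rm *m S).
  rewrite !adjmxM hR hS' !mulmxA -(mulmxA _ Rm Rm) RR.
  move/le_trans; apply; apply: ler_wsqrtr.
  have eb : \tr (S *m Rm *m Rm *m S) = \tr (M *m rho).
    by rewrite -(mulmxA _ Rm Rm) RR mxtrace_mulC mulmxA SS mxtrace_mulC.
  rewrite hS eb; apply: ler_wpM2r; first exact/Re_ge0/tr_psd_mul.
  have pK : psd (S' *m M *m S') by rewrite -{1}hS'; exact: psd_conj.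
  have -> : \tr (adjmx Z *m S' *m M *m S' *m Z) = \tr (S' *m M *m S' *m (Z *m adjmx Z)).
    by rewrite [LHS]mxtrace_mulC [RHS]mxtrace_mulC !mulmxA.
  have -> : \tr (M *m rho') = \tr (S' *m M *m S').
    by rewrite -SS' [LHS]mxtrace_mulC [RHS]mxtrace_mulC !mulmxA.
  exact: tr_psd_le.
set p := complex.Re (\tr (P *m rho)); set q := complex.Re (\tr (P *m rho')).
have e1 : complex.Re (\tr ((1%:M - P) *m rho)) = 1 - p.
  by rewrite mulmxBl mul1mx linearB /= ReB trho.
have e1' : complex.Re (\tr ((1%:M - P) *m rho')) = 1 - q.
  by rewrite mulmxBl mul1mx linearB /= ReB trho'.
have p0 : 0 <= p by exact/Re_ge0/tr_psd_mul.
have q0 : 0 <= q by exact/Re_ge0/tr_psd_mul.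
have p1 : 0 <= 1 - p by rewrite -e1; exact/Re_ge0/tr_psd_mul.
have q1 : 0 <= 1 - q by rewrite -e1'; exact/Re_ge0/tr_psd_mul.
have tn0 : 0 <= trnorm X by exact/Re_ge0/psd_tr.
have tnle : trnorm X <= Num.sqrt (q * p) + Num.sqrt ((1 - q) * (1 - p)).
  rewrite /trnorm -/T -ZX /X.
  have -> : adjmx Z *m (S' *m S) =
      adjmx Z *m S' *m P *m S + adjmx Z *m S' *m (1%:M - P) *m S.
    by rewrite -mulmxDl -mulmxDr addrC subrK mulmx1 mulmxA.
  rewrite linearD /= ReD; apply: lerD.
    exact: term.
  by rewrite -e1 -e1'; exact: term.
have := fvdg_real (p := p) (q := q).
rewrite /fidelity -/S' -/S -/X.
have hp : 0 <= p <= 1 by rewrite p0 /= -subr_ge0.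
have hq : 0 <= q <= 1 by rewrite q0 /= -subr_ge0.
move=> /(_ hp hq) h.
have : trnorm X ^+ 2 <= (Num.sqrt (q * p) + Num.sqrt ((1 - q) * (1 - p))) ^+ 2.
  by rewrite ler_pXn2r // nnegrE; apply: le_trans tnle.
move: h; set y := (_ + _) ^+ 2; move=> h1 h2; lra.
Qed.


Lemma sum_tens m n (F : 'I_(m * n) -> C) :
  \sum_(x < m * n) F x = \sum_(i < m) \sum_(j < n) F (mxtens_index (i, j)).
Proof.
rewrite (reindex (@mxtens_index m n)); last first.
  by exists (@mxtens_unindex m n) => x _; rewrite ?mxtens_indexK ?mxtens_unindexK.
by rewrite pair_big /=; apply: eq_bigr => -[i j].
Qed.

Lemma tr_tens m n (A : 'M[C]_m) (B : 'M[C]_n) : \tr (A *t B) = \tr A * \tr B.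
Proof.
rewrite /mxtrace sum_tens mulr_suml; apply: eq_bigr => i _.
by rewrite mulr_sumr; apply: eq_bigr => j _; rewrite tensmxE.
Qed.

Lemma tr_idtens k dA dB (Phi : 'M[C]_dA -> 'M[C]_dB) (X : 'M[C]_(k * dA)) :
  is_channel Phi -> \tr (idtens Phi X) = \tr X.
Proof.
case=> _ tP _; rewrite /idtens linear_sum /=.
rewrite [RHS]/mxtrace sum_tens; apply: eq_bigr => i _.
rewrite linear_sum /= (bigD1 i) //= big1 ?addr0; last first.
  move=> j ji; rewrite tr_tens; suff -> : \tr (delta_mx i j : 'M[C]_k) = 0 by rewrite mul0r.
  rewrite /mxtrace big1 // => a _; rewrite mxE; case: (eqVneq a i) => [->|]//=.
  by rewrite eq_sym (negPf ji).
rewrite tr_tens tP; have -> : \tr (delta_mx i i : 'M[C]_k) = 1.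
  rewrite /mxtrace (bigD1 i) //= mxE !eqxx big1 ?addr0 // => a ai.
  by rewrite mxE (negPf ai).
by rewrite mul1r /mxtrace; apply: eq_bigr => a _; rewrite mxE.
Qed.

Lemma pure_stateP n (psi : 'M[C]_n) : pure_state psi -> psd psi /\ \tr psi = 1.
Proof.
case=> v [v1 ->]; split; first by have := psd_adjmul (adjmx v); rewrite adjmxK.
by rewrite mxtrace_mulC /mxtrace big_ord1.
Qed.

Lemma chan_state k dA dB (Phi : 'M[C]_dA -> 'M[C]_dB) (psi : 'M[C]_(k * dA)) :
  is_channel Phi -> pure_state psi -> psd (idtens Phi psi) /\ \tr (idtens Phi psi) = 1.
Proof.
move=> cP /pure_stateP [pp tp]; split; last by rewrite tr_idtens.
by case: cP => _ _; apply.
Qed.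

Lemma log_step (t q c0 lam : R) : 0 < c0 -> c0 <= q -> q <= 2 `^ lam * t ->
  - log2 t - log2 (1 / c0) <= lam.
Proof.
move=> c00 c0q qt.
have p2 : 0 < 2 `^ lam :> R by apply: powR_gt0.
have l2 : 0 < ln (2 : R) by apply: ln_gt0; rewrite ltr1n.
have t0 : 0 < t.
  have : 0 < 2 `^ lam * t by apply: lt_le_trans c00 (le_trans c0q qt).
  by rewrite pmulr_rgt0.
have : ln c0 <= ln (2 `^ lam * t).
  by rewrite ler_ln ?posrE ?mulr_gt0 //; apply: le_trans qt.
rewrite lnM ?posrE // ln_powR /log2 div1r lnV ?posrE // => h.
have -> : - (ln t / ln 2) - - ln c0 / ln 2 = (ln c0 - ln t) / ln (2 : R).
  by field; apply: lt0r_neq0.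
rewrite ler_pdivrMr //; lra.
Qed.

Local Open Scope classical_set_scope.
Lemma state_main (eps1 eps2 : R) n (rho rho' sigma : 'M[C]_n) :
  eps1 + Num.sqrt eps2 < 1 ->
  psd rho -> \tr rho = 1 -> psd rho' -> \tr rho' = 1 ->
  1 - eps2 <= fidelity rho' rho ->
  (DH eps1 rho sigma <= Dmax rho' sigma + (log2 (1 / (1 - eps1 - Num.sqrt eps2)))%:E)%E.
Proof.
move=> hs prho trho prho' trho' hF.
apply: ge_ereal_sup => _ [P [pP [pP' hP]] <-].
set c0 := 1 - eps1 - Num.sqrt eps2.
have c00 : 0 < c0 by rewrite /c0; lra.
have := fid_bound prho trho prho' trho' pP pP'.
set p := complex.Re _; set q := complex.Re _ => hb.
have hpq : p - q <= Num.sqrt eps2 by apply: le_sqrt_of_sqr; lra.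
have c0q : c0 <= q by rewrite /c0; lra.
rewrite /Dmax.
set S := [set lam : R | _].
case: (pselect (exists lam, S lam)) => [[lam0 Slam0]|noS]; last first.
  have -> : [set (lam%:E)%E | lam in S] = set0.
    by apply/seteqP; split => // y [lam Sl _]; apply: noS; exists lam.
  by rewrite ereal_inf0 addye // leey.
have key : forall lam, S lam -> q <= 2 `^ lam * complex.Re (\tr (P *m sigma)).
  move=> lam Sl; have := Re_ge0 (tr_psd_mul pP Sl).
  rewrite mulmxBr linearB /= ReB subr_ge0 -/q -scalemxAr linearZ /=.
  by case: (\tr (P *m sigma)) => a b /=; rewrite !mul0r subr0.
set t := complex.Re _ in key *.
have t0 : 0 < t.
  have := key lam0 Slam0 => h.
  have : 0 < 2 `^ lam0 * t by apply: lt_le_trans c00 (le_trans c0q h).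
  by rewrite pmulr_rgt0 // powR_gt0.
rewrite /mlog2 (leNgt t) t0 /= -leeBlDr //.
apply: le_ereal_inf_tmp => _ [lam Sl <-].
rewrite lee_fin; exact: log_step c00 c0q (key lam Sl).
Qed.

End Aux.

Unset Implicit Arguments.
Theorem lemma4 (R : realType) (eps1 eps2 : R) (dA dB : nat)
    (E M : 'M[R[i]]_dA -> 'M[R[i]]_dB) :
  0 <= eps1 -> 0 <= eps2 -> eps1 + Num.sqrt eps2 < 1 ->
  is_channel E -> is_channel M ->
  (DH_chan eps1 E M <=
     Dmax_chan eps2 E M + (log2 (1 / (1 - eps1 - Num.sqrt eps2)))%:E)%E.
Proof.
move=> e10 e20 hs chE chM.
apply: ge_ereal_sup => _ [k [psi [ppsi ->]]].
rewrite -leeBlDr //.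
apply: le_ereal_inf_tmp => _ [E' [chE' hF] <-].
have hle : (Dmax (idtens E' psi) (idtens M psi) <= Dmax_chan0 E' M)%E.
  by apply: ereal_sup_ubound; exists k, psi.
apply: le_trans hle; rewrite leeBlDr //.
have [pr tr] := chan_state chE ppsi; have [pr' tr'] := chan_state chE' ppsi.
apply: state_main => //.
apply: le_trans hF _.
apply: ge_inf; last by exists k, psi.
by exists 0 => _ [k' [psi' [_ ->]]]; exact: sqr_ge0.
Qed.
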